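(* Let $X\in\mathbb{R}^{m\times n}$ and $\lambda>0$, and let $X=U\Sigma V^T$ be the SVD of $X$ with singular values $\sigma_1\ge\sigma_2\ge\cdots\ge 0$. Let $r$ be an integer attaining $\min_k \big(k+\lambda\sum_{i>k}\sigma_i^2\big)$, and let $U_1,\Sigma_1,V_1$ consist of the top $r$ left singular vectors, singular values and right singular vectors of $X$. Then an optimal solution of $$\min_{A\in\mathbb{R}^{m\times n},\,Z\in\mathbb{R}^{n\times n},\,E\in\mathbb{R}^{m\times n}} \|Z\|_*+\lambda\|E\|_F^2\quad\text{s.t.}\quad A=AZ,\ X=A+E$$ is given by $A^*=U_1\Sigma_1V_1^T$, $Z^*=V_1V_1^T$, $E^*=X-A^*$.
   Context: $\|\cdot\|_*$ denotes the nuclear norm and $\|\cdot\|_F$ the Frobenius norm. *)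

(* Defs.v *)
(* Real numbers are modelled by an arbitrary real closed
   field R : rcfType (the statement is first-order algebraic, so this is a
   generalisation of the R = reals case). *)
From HB Require Import structures.
From mathcomp Require Import all_boot all_order all_algebra.
Set Implicit Arguments. Unset Strict Implicit. Unset Printing Implicit Defensive.
Import Order.TTheory GRing.Theory Num.Theory.
Local Open Scope ring_scope.

Section Defs.
Variable R : rcfType.

Definition sigma_mx (m n : nat) (s : nat -> R) : 'M[R]_(m, n) :=
  \matrix_(i < m, j < n) (if (i : nat) == j then s i else 0).

(* The same matrix keeping only the top r singular values (Sigma_1 padded
   with zeros), so that U *m sigma_top_mx r s *m V^T = U_1 Sigma_1 V_1^T. *)
Definition sigma_top_mx (m n r : nat) (s : nat -> R) : 'M[R]_(m, n) :=
  \matrix_(i < m, j < n) (if ((i : nat) == j) && (i < r)%N then s i else 0).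

Definition is_svd (m n : nat) (X : 'M[R]_(m, n)) (U : 'M[R]_m) (s : nat -> R)
    (V : 'M[R]_n) : Prop :=
  [/\ U^T *m U = 1%:M, V^T *m V = 1%:M,
      (forall i, (i < minn m n)%N -> 0 <= s i),
      (forall i j, (i <= j)%N -> (j < minn m n)%N -> s j <= s i) &
      X = U *m sigma_mx m n s *m V^T].

Definition is_nuclear_norm (p q : nat) (Z : 'M[R]_(p, q)) (t : R) : Prop :=
  exists (U : 'M[R]_p) (s : nat -> R) (V : 'M[R]_q),
    is_svd Z U s V /\ t = \sum_(i < minn p q) s i.

Definition frob_norm (p q : nat) (E : 'M[R]_(p, q)) : R :=
  Num.sqrt (\sum_(i < p) \sum_(j < q) E i j ^+ 2).

Definition feasible (m n : nat) (X : 'M[R]_(m, n)) (A : 'M[R]_(m, n))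
    (Z : 'M[R]_n) (E : 'M[R]_(m, n)) : Prop :=
  A = A *m Z /\ X = A + E.

(* Value of k + lambda * sum_{i > k} sigma_i^2 (1-based i), i.e. 0-based
   indices k <= i < min m n. *)
Definition rank_cost (m n : nat) (lambda : R) (s : nat -> R) (k : nat) : R :=
  k%:R + lambda * \sum_(k <= i < minn m n) s i ^+ 2.

End Defs.

(* Main.v *)
Require Import Defs.
From HB Require Import structures.
From mathcomp Require Import all_boot all_order all_algebra.
From mathcomp Require Import ring lra.
Import Order.TTheory GRing.Theory Num.Theory.
Local Open Scope ring_scope.
Set Implicit Arguments. Unset Strict Implicit. Unset Printing Implicit Defensive.

Section H.
Variable R : rcfType.

Lemma diag_sq_le n (M : 'M[R]_n) i : M i i ^+ 2 <= (M^T *m M) i i.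
Proof.
rewrite mxE (bigD1 i) //= !mxE -expr2 lerDl.
by apply: sumr_ge0 => j _; rewrite mxE -expr2 sqr_ge0.
Qed.

Lemma le1_of_sq (x : R) : x ^+ 2 <= 1 -> x <= 1.
Proof. move=> h; rewrite expr2 in h; nra. Qed.

Lemma symidem_diag n (P : 'M[R]_n) i : P^T = P -> P *m P = P -> 0 <= P i i <= 1.
Proof.
move=> hs hi.
have h1 := diag_sq_le P i. rewrite hs hi in h1. rewrite expr2 in h1.
apply/andP; split; nra.
Qed.

Lemma diag_le1 n (M : 'M[R]_n) i : (M^T *m M) i i <= 1 -> M i i <= 1.
Proof. move=> h; apply: le1_of_sq; exact: le_trans (diag_sq_le M i) h. Qed.

Lemma orth_r n (V : 'M[R]_n) : V^T *m V = 1%:M -> V *m V^T = 1%:M.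
Proof. exact: mulmx1C. Qed.

Lemma tr_MMt p q (M : 'M[R]_(p, q)) :
  \tr (M *m M^T) = \sum_(i < p) \sum_(j < q) M i j ^+ 2.
Proof.
rewrite /mxtrace; apply: eq_bigr => i _; rewrite mxE.
by apply: eq_bigr => j _; rewrite mxE expr2.
Qed.

Lemma tr_MMt_ge0 p q (M : 'M[R]_(p, q)) : 0 <= \tr (M *m M^T).
Proof. rewrite tr_MMt; apply: sumr_ge0 => i _; apply: sumr_ge0 => j _; exact: sqr_ge0. Qed.

Lemma tr_MMt_eq0 p q (M : 'M[R]_(p, q)) : \tr (M *m M^T) = 0 -> M = 0.
Proof.
rewrite tr_MMt => h; apply/matrixP => i j; rewrite mxE.
have h1 : \sum_(j < q) M i j ^+ 2 = 0.
  by apply: (psumr_eq0P _ h) => // k _; apply: sumr_ge0 => l _; exact: sqr_ge0.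
have h2 : M i j ^+ 2 = 0.
  by apply: (psumr_eq0P _ h1) => // k _; exact: sqr_ge0.
by apply/eqP; rewrite -sqrf_eq0 h2.
Qed.

Lemma frobE p q (M : 'M[R]_(p, q)) : frob_norm M ^+ 2 = \tr (M *m M^T).
Proof. by rewrite /frob_norm sqr_sqrtr ?tr_MMt // -tr_MMt tr_MMt_ge0. Qed.

Lemma sum_if_eq m (i : nat) (g : nat -> R) :
  \sum_(l < m) (if (l : nat) == i then g (l : nat) else 0) = if (i < m)%N then g i else 0.
Proof.
case: ifP => him.
  rewrite (bigD1 (Ordinal him)) //= ifT // big1 ?addr0 // => l hl.
  case: eqP => // hl2; exfalso; move: hl; apply/negP; rewrite negbK.
  by apply/eqP; apply: val_inj.
rewrite big1 // => l _; case: eqP => // hl; exfalso.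
by move: (ltn_ord l); rewrite hl him.
Qed.

Definition dmx m n (f : nat -> R) : 'M[R]_(m, n) :=
  \matrix_(i < m, j < n) (if (i : nat) == j then f i else 0).

Lemma dmx_TT m n f (i j : 'I_n) :
  ((dmx m n f)^T *m dmx m n f) i j = if (i == j) && (i < m)%N then f i ^+ 2 else 0.
Proof.
rewrite mxE.
transitivity (\sum_(l < m) (if (l : nat) == i then (if i == j then f i ^+ 2 else 0) else 0)).
  apply: eq_bigr => l _; rewrite !mxE.
  case: (eqVneq (l : nat) i) => hli /=; last by rewrite mul0r.
  rewrite hli; case: (eqVneq i j) => [<-|hij]; first by rewrite eqxx expr2.
  have hij' : ((i : nat) == j) = false by apply/negbTE.
  by rewrite hij' mulr0.
rewrite (sum_if_eq m i (fun _ => if i == j then f i ^+ 2 else 0)).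
by case: (i == j); case: (i < m)%N.
Qed.


Lemma dmx_mul_ii n (f : nat -> R) (M : 'M[R]_n) i : (dmx n n f *m M) i i = f i * M i i.
Proof.
rewrite mxE (bigD1 i) //= !mxE eqxx big1 ?addr0 // => l hl.
rewrite mxE; case: eqP => [h|]; last by rewrite mul0r.
exfalso; move: hl; apply/negP; rewrite negbK; apply/eqP; exact: val_inj.
Qed.

Lemma dmx_tr m n f (W : 'M[R]_n) :
  \tr ((dmx m n f)^T *m dmx m n f *m W) =
  \sum_(i < n) (if (i < minn m n)%N then f i ^+ 2 else 0) * W i i.
Proof.
rewrite /mxtrace; apply: eq_bigr => i _.
rewrite mxE (bigD1 i) //= dmx_TT eqxx big1 ?addr0.
  by rewrite /= (leq_min i.+1 m n) ltn_ord andbT; case: (i < m)%N.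
move=> l hl; rewrite dmx_TT; case: eqP => [h|]; last by rewrite mul0r.
by rewrite h eqxx in hl.
Qed.


Lemma rearr (N k : nat) (c d : nat -> R) :
  (forall i, (i < N)%N -> 0 <= c i) ->
  (forall i j, (i <= j)%N -> (j < N)%N -> c j <= c i) ->
  (forall i, (i < N)%N -> 0 <= d i <= 1) ->
  \sum_(0 <= i < N) d i <= k%:R ->
  \sum_(k <= i < N) c i <= \sum_(0 <= i < N) c i * (1 - d i).
Proof.
move=> c0 cd d01 hd.
set K := minn k N.
set th := if (k < N)%N then c k else 0.
have hKN : (K <= N)%N by rewrite geq_minr.
have htail : \sum_(k <= i < N) c i = \sum_(K <= i < N) c i.
  rewrite /K; case: (leqP k N) => hk //.
  by rewrite !big_geq // ltnW.
rewrite htail (big_cat_nat (leq0n K) hKN) /=.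
have e1 : \sum_(K <= i < N) c i * (1 - d i) = \sum_(K <= i < N) c i - \sum_(K <= i < N) c i * d i.
  by rewrite -sumrB; apply: eq_bigr => i _; rewrite mulrBr mulr1.
rewrite e1 addrCA lerDl subr_ge0.
have hA : \sum_(K <= i < N) c i * d i <= \sum_(K <= i < N) th * d i.
  rewrite big_nat [X in _ <= X]big_nat; apply: ler_sum => i /andP [hi1 hi2].
  have hkN : (k < N)%N.
    rewrite /K in hi1; case: (leqP N k) => // hNk.
    by move: hi1; rewrite (minn_idPr hNk) leqNgt hi2.
  have hKk : K = k by rewrite /K (minn_idPl (ltnW hkN)).
  rewrite /th hkN; have /andP [hd0 _] := d01 i hi2.
  apply: ler_wpM2r => //; apply: cd => //; by rewrite -hKk.
have hB : \sum_(0 <= i < K) th * (1 - d i) <= \sum_(0 <= i < K) c i * (1 - d i).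
  rewrite big_nat [X in _ <= X]big_nat; apply: ler_sum => i /andP [_ hi].
  have hiN : (i < N)%N by apply: leq_trans hi hKN.
  have /andP [_ hd1] := d01 i hiN.
  apply: ler_wpM2r; first by rewrite subr_ge0.
  rewrite /th; case: ifP => hkN; last exact: c0.
  apply: cd => //; apply: ltnW; move: hi; rewrite /K (minn_idPl (ltnW hkN)) //.
apply: le_trans hA _; apply: le_trans _ hB.
rewrite -!mulr_sumr; rewrite sumrB.
have hsum1 : \sum_(0 <= i < K) (1 : R) = K%:R.
  by rewrite sumr_const_nat subn0.
rewrite hsum1.
have hsplit : \sum_(0 <= i < N) d i = \sum_(0 <= i < K) d i + \sum_(K <= i < N) d i.
  exact: big_cat_nat.
rewrite /th; case: ifP => hkN; last by rewrite !mul0r.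
apply: ler_wpM2l; first exact: c0.
have hKk : K = k by rewrite /K (minn_idPl (ltnW hkN)).
rewrite lerBrDr addrC -hsplit hKk; exact: hd.
Qed.

Lemma proj_of_base m n k (A : 'M[R]_(m, n)) (Z : 'M[R]_n) (B : 'M[R]_(k, n)) :
  A = A *m Z -> B *m B^T \in unitmx -> (A <= B)%MS -> (B <= A)%MS ->
  exists (Q : 'M[R]_n),
    [/\ Q^T = Q, Q *m Q = Q, \tr Q = k%:R, A *m Q = A & Q *m Z = Q].
Proof.
move=> hAZ hG hAB hBA.
set G := B *m B^T in hG *.
have hGt : G^T = G by rewrite /G trmx_mul trmxK.
exists (B^T *m invmx G *m B); split.
- by rewrite !trmx_mul trmxK trmx_inv hGt mulmxA.
- rewrite -!mulmxA (mulmxA B) (mulmxA (B *m B^T)) -/G mulmxV // mul1mx //.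
- by rewrite mxtrace_mulC mulmxA -/G mulmxV // mxtrace1.
- move: hAB; case/submxP => C ->.
  by rewrite -!mulmxA (mulmxA B) -/G (mulmxA G) mulmxV // mul1mx.
- move: hBA; case/submxP => D hD.
  by rewrite -!mulmxA hD -(mulmxA D) -hAZ.
Qed.

Lemma proj_exists m n (A : 'M[R]_(m, n)) (Z : 'M[R]_n) : A = A *m Z ->
  exists (k : nat) (Q : 'M[R]_n),
    [/\ Q^T = Q, Q *m Q = Q, \tr Q = k%:R, A *m Q = A & Q *m Z = Q].
Proof.
move=> hAZ.
have hG : row_base A *m (row_base A)^T \in unitmx.
  set B := row_base A.
  set G := B *m B^T.
  rewrite -row_free_unit -kermx_eq0; apply/eqP.
  set K := kermx G.
  have hK : K *m G = 0 by exact: mulmx_ker.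
  have hKB : K *m B = 0.
    apply: tr_MMt_eq0; rewrite trmx_mul mulmxA -(mulmxA K) -/G hK mul0mx.
    exact: mxtrace0.
  by apply/eqP; rewrite -(mulmx_free_eq0 _ (row_base_free A)) hKB.
exists (\rank A).
by apply: (proj_of_base hAZ hG); rewrite eq_row_base.
Qed.

Lemma orth_diag_le1 n (Q U V : 'M[R]_n) i : Q^T = Q -> Q *m Q = Q ->
  U^T *m U = 1%:M -> V^T *m V = 1%:M -> (V^T *m Q *m U) i i <= 1.
Proof.
move=> hs hi hU hV; apply: diag_le1.
have e : (V^T *m Q *m U)^T *m (V^T *m Q *m U) = U^T *m Q *m U.
  rewrite !trmx_mul trmxK hs -!mulmxA (mulmxA V) (orth_r hV) mul1mx.
  by rewrite (mulmxA Q) hi.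
have h1 : (U^T *m Q *m U)^T = U^T *m Q *m U by rewrite !trmx_mul trmxK hs mulmxA.
have h2 : (U^T *m Q *m U) *m (U^T *m Q *m U) = U^T *m Q *m U.
  by rewrite -!mulmxA (mulmxA U) (orth_r hU) mul1mx (mulmxA Q) hi.
by rewrite e; case/andP: (symidem_diag i h1 h2).
Qed.

Lemma nuc_lower n (Q Z : 'M[R]_n) (k : nat) t : Q^T = Q -> Q *m Q = Q ->
  \tr Q = k%:R -> Q *m Z = Q -> is_nuclear_norm Z t -> k%:R <= t.
Proof.
move=> hs hi htr hQZ [Uz [sz [Vz [[hU hV hs0 _ hZ] ->]]]].
rewrite minnn in hs0 *.
rewrite -htr -hQZ hZ !mulmxA (mxtrace_mulC (Q *m Uz *m _)) !mulmxA (mxtrace_mulC (Vz^T *m Q *m Uz)).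
change (sigma_mx n n sz) with (dmx n n sz).
rewrite /mxtrace; apply: ler_sum => i _.
rewrite dmx_mul_ii -[X in _ <= X]mulr1; apply: ler_wpM2l; first exact: hs0.
exact: orth_diag_le1.
Qed.

Lemma ey_step1 m n (X A : 'M[R]_(m, n)) (Q : 'M[R]_n) :
  Q^T = Q -> Q *m Q = Q -> A *m Q = A ->
  \tr (X *m (1%:M - Q) *m X^T) <= \tr ((X - A) *m (X - A)^T).
Proof.
move=> hs hi hAQ.
set M := X - A.
have eM : M *m M^T = M *m (1%:M - Q) *m M^T + (M *m Q) *m (M *m Q)^T.
  have -> : M *m Q *m (M *m Q)^T = M *m Q *m M^T.
    by rewrite trmx_mul hs mulmxA -(mulmxA M Q Q) hi.
  by rewrite -mulmxDl -mulmxDr subrK mulmx1.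
have eX : M *m (1%:M - Q) = X *m (1%:M - Q).
  rewrite /M !mulmxBr !mulmx1 !mulmxBl hAQ; by rewrite opprB addrA subrK.
have hP : (1%:M - Q) *m (1%:M - Q)^T = 1%:M - Q :> 'M[R]_n.
  rewrite linearB /= trmx1 hs mulmxBr mulmx1 mulmxBl mul1mx hi subrr subr0 //.
have eY : M *m (1%:M - Q) *m M^T = X *m (1%:M - Q) *m X^T.
  have e1 : forall Y : 'M[R]_(m, n),
      Y *m (1%:M - Q) *m Y^T = (Y *m (1%:M - Q)) *m (Y *m (1%:M - Q))^T.
    by move=> Y; rewrite trmx_mul !mulmxA -(mulmxA Y (1%:M - Q) (1%:M - Q)^T) hP.
  by rewrite !e1 eX.
rewrite eM mxtraceD eY lerDl; exact: tr_MMt_ge0.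
Qed.

Lemma sum_widen (N n : nat) (g : nat -> R) : (N <= n)%N ->
  \sum_(0 <= i < N) g i = \sum_(i < n) (if (i < N)%N then g i else 0).
Proof. by move=> h; rewrite big_mkord (big_ord_widen n _ h) big_mkcond. Qed.

Lemma ey_step2 m n (X : 'M[R]_(m, n)) U s V (Q : 'M[R]_n) (k : nat) :
  is_svd X U s V -> Q^T = Q -> Q *m Q = Q -> \tr Q = k%:R ->
  \sum_(k <= i < minn m n) s i ^+ 2 <= \tr (X *m (1%:M - Q) *m X^T).
Proof.
case=> hU hV hs0 hsd hX hs hi htr.
set N := minn m n.
have hNn : (N <= n)%N by rewrite geq_minr.
set P := V^T *m Q *m V.
set D := dmx m n s.
have hW : V^T *m (1%:M - Q) *m V = 1%:M - P by rewrite mulmxBr mulmx1 mulmxBl hV.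
have eX : X *m (1%:M - Q) *m X^T = U *m (D *m (V^T *m (1%:M - Q) *m V) *m D^T) *m U^T.
  by rewrite hX !trmx_mul trmxK !mulmxA.
have eT : \tr (X *m (1%:M - Q) *m X^T) = \tr (D^T *m D *m (1%:M - P)).
  rewrite eX (mxtrace_mulC (U *m _)) (mulmxA U^T U) hU mul1mx hW mxtrace_mulC mulmxA //.
have hPs : P^T = P by rewrite /P !trmx_mul trmxK hs mulmxA.
have hPi : P *m P = P.
  by rewrite /P -!mulmxA (mulmxA V) (orth_r hV) mul1mx (mulmxA Q) hi.
have htrP : \tr P = k%:R by rewrite /P mxtrace_mulC mulmxA (orth_r hV) mul1mx.
pose d (i : nat) := \sum_(j < n | (j : nat) == i) P j j.
have hd (i : 'I_n) : d i = P i i by rewrite /d (big_pred1_eq _ i).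
pose c (i : nat) := s i ^+ 2.
have ->: \tr (X *m (1%:M - Q) *m X^T) = \sum_(0 <= i < N) c i * (1 - d i).
  rewrite eT dmx_tr (sum_widen _ hNn).
  apply: eq_bigr => i _; rewrite hd !mxE eqxx /=.
  by case: ifP => _; rewrite ?mul0r.
apply: rearr.
- by move=> i _; exact: sqr_ge0.
- move=> i j hij hjN.
  have hiN : (i < N)%N by apply: leq_ltn_trans hij hjN.
  have h1 := hs0 _ hjN; have h2 := hsd _ _ hij hjN.
  rewrite /c !expr2; nra.
- move=> i hiN.
  have hin : (i < n)%N by apply: leq_trans hiN hNn.
  by rewrite -[i]/(nat_of_ord (Ordinal hin)) hd; exact: symidem_diag.
- rewrite -htrP (sum_widen _ hNn).
  rewrite /mxtrace; apply: ler_sum => i _; rewrite hd.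
  case: ifP => _ //; by case/andP: (symidem_diag i hPs hPi).
Qed.

Lemma st_mul m n r (s : nat -> R) :
  sigma_top_mx m n r s *m sigma_top_mx n n r (fun _ => 1) = sigma_top_mx m n r s.
Proof.
apply/matrixP => i j; rewrite mxE (bigD1 j) //= big1 ?addr0.
  rewrite !mxE eqxx /=; case: ifP => h; last by rewrite mul0r.
  by case/andP: h => /eqP -> ->; rewrite mulr1.
move=> l hl; rewrite !mxE.
case: ifP => h; last by rewrite mul0r.
have : (l : nat) != j by apply: contra hl => /eqP e; apply/eqP; apply: val_inj.
by move/negbTE => ->; rewrite mulr0.
Qed.

Lemma nuc_star n (V : 'M[R]_n) r t : V^T *m V = 1%:M -> (r <= n)%N ->
  is_nuclear_norm (V *m sigma_top_mx n n r (fun _ => 1) *m V^T) t -> t <= r%:R.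
Proof.
move=> hV hrn [U' [s' [V' [[hU' hV' _ _ hZ] ->]]]].
rewrite minnn.
set D := sigma_top_mx n n r (fun _ => 1) in hZ.
set Zs := V *m D *m V^T in hZ.
have eS : U'^T *m Zs *m V' = sigma_mx n n s'.
  by rewrite hZ !mulmxA hU' mul1mx -mulmxA hV' mulmx1.
have -> : \sum_(i < n) s' i = \tr (sigma_mx n n s').
  by apply: eq_bigr => i _; rewrite mxE eqxx.
rewrite -eS /Zs.
set O := V^T *m V' *m U'^T *m V.
have eT : \tr (U'^T *m (V *m D *m V^T) *m V') = \tr (D *m O).
  have e1 : U'^T *m (V *m D *m V^T) *m V' = (U'^T *m V *m D) *m (V^T *m V').
    by rewrite !mulmxA.
  rewrite e1 mxtrace_mulC.
  have e2 : V^T *m V' *m (U'^T *m V *m D) = O *m D by rewrite /O !mulmxA.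
  by rewrite e2 mxtrace_mulC.
rewrite eT.
have hO : O^T *m O = 1%:M.
  rewrite /O !trmx_mul !trmxK !mulmxA -(mulmxA _ V V^T) (orth_r hV) mulmx1.
  rewrite -(mulmxA _ V'^T V') hV' mulmx1 -(mulmxA _ U' U'^T) (orth_r hU').
  by rewrite mulmx1 hV.
have -> : r%:R = \sum_(i < n) (if (i < r)%N then (1 : R) else 0).
  by rewrite -(sum_widen (fun _ => (1:R)) hrn) sumr_const_nat subn0.
rewrite /mxtrace; apply: ler_sum => i _.
rewrite mxE (bigD1 i) //= big1 ?addr0.
  rewrite [D _ _]mxE eqxx /=; case: ifP => _; last by rewrite mul0r.
  rewrite mul1r; apply: diag_le1; rewrite hO mxE eqxx //.
move=> l hl; rewrite [D _ _]mxE.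
have : (i : nat) != l by apply: contra hl => /eqP e; apply/eqP; apply: val_inj.
by move/negbTE => ->; rewrite mul0r.
Qed.

Lemma estar_tr m n (X : 'M[R]_(m, n)) U s V r : is_svd X U s V -> (r <= minn m n)%N ->
  let E := X - U *m sigma_top_mx m n r s *m V^T in
  \tr (E *m E^T) = \sum_(r <= i < minn m n) s i ^+ 2.
Proof.
case=> hU hV _ _ hX hr E.
pose f (i : nat) := if (r <= i)%N then s i else 0.
have eE : E = U *m dmx m n f *m V^T.
  rewrite /E hX -mulmxBl -mulmxBr; congr (_ *m _ *m _).
  apply/matrixP => i j; rewrite !mxE /f.
  case: ifP => _ /=; last by rewrite subr0.
  by case: (ltnP i r) => _; rewrite /= ?subrr ?subr0.
have e1 : \tr (E *m E^T) = \tr ((dmx m n f)^T *m dmx m n f *m 1%:M).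
  rewrite eE !trmx_mul trmxK !mulmxA mulmx1 -(mulmxA _ V^T V) hV mulmx1.
  rewrite mxtrace_mulC !mulmxA hU mul1mx mxtrace_mulC //.
rewrite e1 dmx_tr.
have hNn : (minn m n <= n)%N by rewrite geq_minr.
have eR : \sum_(r <= i < minn m n) s i ^+ 2 = \sum_(0 <= i < minn m n) f i ^+ 2.
  rewrite (big_cat_nat (leq0n r) hr) /=.
  have -> : \sum_(0 <= i < r) f i ^+ 2 = 0.
    by rewrite big_nat big1 // => i /andP [_ hi]; rewrite /f leqNgt hi /= expr2 mulr0.
  by rewrite add0r big_nat [RHS]big_nat; apply: eq_bigr => i /andP [hi _]; rewrite /f hi.
rewrite eR (sum_widen (fun i => f i ^+ 2) hNn).
by apply: eq_bigr => i _; rewrite mxE eqxx mulr1.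
Qed.

End H.
Unset Implicit Arguments.

Theorem corollary2 (R : rcfType) (m n : nat) (X : 'M[R]_(m, n)) (lambda : R)
    (U : 'M[R]_m) (s : nat -> R) (V : 'M[R]_n) (r : nat) :
  0 < lambda ->
  is_svd X U s V ->
  (forall k : nat, rank_cost m n lambda s r <= rank_cost m n lambda s k) ->
  let Astar := U *m sigma_top_mx m n r s *m V^T in
  let Zstar := V *m sigma_top_mx n n r (fun _ => 1) *m V^T in
  let Estar := X - Astar in
  feasible X Astar Zstar Estar /\
  forall (A : 'M[R]_(m, n)) (Z : 'M[R]_n) (E : 'M[R]_(m, n)),
    feasible X A Z E ->
    forall tstar t : R,
      is_nuclear_norm Zstar tstar -> is_nuclear_norm Z t ->
      tstar + lambda * frob_norm Estar ^+ 2 <= t + lambda * frob_norm E ^+ 2.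
Proof.
move=> hl hsvd hmin Astar Zstar Estar.
have [hU hV hs0 hsd hX] := hsvd.
have hrN : (r <= minn m n)%N.
  case: (leqP r (minn m n)) => // hNr.
  have := hmin (minn m n); rewrite /rank_cost !big_geq // ?(ltnW hNr) //.
  by rewrite !mulr0 !addr0 ler_nat leqNgt hNr.
split.
  split; last by rewrite /Estar addrC subrK.
  rewrite /Astar /Zstar !mulmxA -(mulmxA _ V^T V) hV mulmx1.
  congr (_ *m _); rewrite -mulmxA; congr (_ *m _); exact/esym/st_mul.
move=> A Z E [hAZ hXE] tstar t hts ht.
have hE : E = X - A by rewrite hXE addrC addKr.
have [k [Q [hs hi htr hAQ hQZ]]] := proj_exists hAZ.
have h1 := nuc_lower hs hi htr hQZ ht.
have h2 := ey_step2 hsvd hs hi htr.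
have h3 := ey_step1 X hs hi hAQ.
have hrn : (r <= n)%N by apply: leq_trans hrN (geq_minr _ _).
have h4 := nuc_star hV hrn hts.
have h5 : \tr (Estar *m Estar^T) = \sum_(r <= i < minn m n) s i ^+ 2 := estar_tr hsvd hrN.
have h6 := hmin k; rewrite /rank_cost in h6.
have h7 : lambda * \sum_(k <= i < minn m n) s i ^+ 2 <= lambda * \tr ((X - A) *m (X - A)^T).
  by apply: ler_wpM2l; [exact: ltW | exact: le_trans h2 h3].
rewrite !frobE hE h5; lra.
Qed.
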